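(* Let $k \geq \ell \ge 1$, $n \geq k+\ell$, and let $\mathcal F \subset \binom{[n]}{k}$, $\mathcal G \subset \binom{[n]}{\ell}$ be initial, cross-intersecting families. For $G \in \mathcal G$ let $p(G)$ be the largest integer $p \in \{0,1,\dots,\ell\}$ such that $|G \cap [2p+k-\ell]| \geq p$. Assume that if $k=\ell$ then $p(G) \geq 1$ for all $G \in \mathcal G$. Define $\varphi(G) = G \,\Delta\, [2p(G)+k-\ell]$ (symmetric difference). Then: (i) $|\varphi(G)| = k$ for all $G \in \mathcal G$; (ii) $\varphi$ is injective on $\mathcal G$ and $\varphi(G) \notin \mathcal F$ for all $G \in \mathcal G$; (iii) $\varphi(G) \cap [\ell] \neq \emptyset$ for every $G \in \mathcal G$ with $G \neq [\ell]$.
   Context: $[m]=\{1,\dots,m\}$ ($[0]=\emptyset$). For $r$-sets $A=\{x_1<\dots<x_r\}$, $B=\{y_1<\dots<y_r\}$, $A\prec B$ means $x_i\le y_i$ for all $i$; a family of $r$-sets is initial if $A\prec B\in\mathcal F$ implies $A\in\mathcal F$. Families are cross-intersecting if every member of one meets every member of the other. *)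

(* Defs.v *)
(* Ground set [n] = {1,...,n} is encoded as 'I_n, the
   element i : 'I_n standing for i+1.  Hence [m] = {1..m} is encoded as
   iseg m = [set i : 'I_n | i < m]. *)
From mathcomp Require Import all_boot.
Set Implicit Arguments. Unset Strict Implicit. Unset Printing Implicit Defensive.

Section Defs.
Variable n : nat.

Definition iseg (m : nat) : {set 'I_n} := [set i : 'I_n | i < m].

Definition sorted_elems (A : {set 'I_n}) : seq nat :=
  sort leq [seq val x | x <- enum A].

Definition shift_le (A B : {set 'I_n}) : bool :=
  (#|A| == #|B|) &&
  all (fun i => nth 0 (sorted_elems A) i <= nth 0 (sorted_elems B) i)
      (iota 0 #|A|).

Definition initial (F : {set {set 'I_n}}) : Prop :=
  forall A B : {set 'I_n}, shift_le A B -> B \in F -> A \in F.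

Definition cross_intersecting (F G : {set {set 'I_n}}) : Prop :=
  forall A B, A \in F -> B \in G -> A :&: B != set0.

Definition symdiff (A B : {set 'I_n}) : {set 'I_n} := (A :\: B) :|: (B :\: A).

Definition pG (k l : nat) (G : {set 'I_n}) : nat :=
  \max_(p < l.+1 | p <= #|G :&: iseg (2 * p + k - l)|) (p : nat).

Definition phi (k l : nat) (G : {set 'I_n}) : {set 'I_n} :=
  symdiff G (iseg (2 * pG k l G + k - l)).
End Defs.

(* Main.v *)
Require Import Defs.
From mathcomp Require Import all_boot.
From mathcomp Require Import zify.
Set Implicit Arguments. Unset Strict Implicit. Unset Printing Implicit Defensive.

Lemma cnt_enum n (A : {set 'I_n}) (P : pred nat) :
  count P [seq val a | a <- enum A] = #|[set a in A | P (val a)]|.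
Proof.
rewrite count_map cardsE cardE /enum_mem size_filter count_filter.
apply: eq_count => y; rewrite !inE /=. by rewrite andbC.
Qed.

Lemma cnt_sorted n (A : {set 'I_n}) x :
  count (fun y => y < x) (sorted_elems A) = #|A :&: iseg n x|.
Proof.
rewrite /sorted_elems count_sort cnt_enum; apply: eq_card => y.
by rewrite !inE.
Qed.

Lemma size_sorted n (A : {set 'I_n}) : size (sorted_elems A) = #|A|.
Proof. by rewrite /sorted_elems size_sort size_map cardE. Qed.

Lemma sorted_sorted n (A : {set 'I_n}) : sorted leq (sorted_elems A).
Proof. exact: (sort_sorted leq_total _). Qed.

Lemma mem_sorted n (A : {set 'I_n}) y : y \in sorted_elems A -> y < n.
Proof. rewrite /sorted_elems mem_sort => /mapP [a _ ->]; exact: ltn_ord. Qed.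

Lemma sorted_cnt_ge (s : seq nat) i : sorted leq s -> i < size s ->
  i < count (fun y => y < (nth 0 s i).+1) s.
Proof.
move=> hs hi; set b := nth 0 s i; rewrite -(cat_take_drop i.+1 s) count_cat.
have: all (fun y => y < (nth 0 s i).+1) (take i.+1 s).
  apply/(all_nthP 0) => j; rewrite size_take => hj.
  have hj' : j <= i by move: hj; case: ifP => h; lia.
  rewrite nth_take; last lia.
  rewrite ltnS.
  apply: (sorted_leq_nth leq_trans leqnn 0 hs) => //; rewrite inE; lia.
rewrite all_count => /eqP ->; rewrite size_take; move: hi; case: ifP => h hi'; lia.
Qed.

Lemma sorted_cnt_le (s : seq nat) i b : sorted leq s -> i < size s ->
  b < nth 0 s i -> count (fun y => y < b.+1) s <= i.
Proof.
move=> hs hi hb; rewrite -(cat_take_drop i s) count_cat -/(drop i s).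
have ->: count (fun y => y < b.+1) (drop i s) = 0.
  apply/eqP; rewrite -leqn0 leqNgt -has_count; apply/negP => /(has_nthP 0) [j].
  rewrite size_drop nth_drop ltnS => hj hle.
  have : nth 0 s i <= nth 0 s (i + j).
    apply: (sorted_leq_nth leq_trans leqnn 0 hs) => //; rewrite ?inE //; lia.
  lia.
rewrite addn0; apply: leq_trans (count_size _ _) _; rewrite size_take; case: ifP => h'; lia.
Qed.

Lemma shift_crit n (A B : {set 'I_n}) : #|A| = #|B| ->
  (forall x, x <= n -> #|B :&: iseg n x| <= #|A :&: iseg n x|) -> shift_le A B.
Proof.
move=> hAB hc; rewrite /shift_le hAB eqxx /=; apply/allP => i.
rewrite mem_iota add0n => /andP[_ hi].
have hiB : i < size (sorted_elems B) by rewrite size_sorted.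
have hiA : i < size (sorted_elems A) by rewrite size_sorted hAB.
have hb : nth 0 (sorted_elems B) i < n by apply/mem_sorted/mem_nth.
rewrite leqNgt; apply/negP => hlt.
have h1 := sorted_cnt_ge (sorted_sorted B) hiB.
have h2 := sorted_cnt_le (sorted_sorted A) hiA hlt.
have := hc _ hb; rewrite -!cnt_sorted; lia.
Qed.

Lemma count_split (P : pred nat) x y : x <= y ->
  count P (iota 0 y) = count P (iota 0 x) + count P (iota x (y - x)).
Proof. by move=> h; rewrite -{1}(subnKC h) iotaD count_cat. Qed.

Lemma count_mono (P : pred nat) x y : x <= y ->
  count P (iota 0 x) <= count P (iota 0 y).
Proof. by move=> h; rewrite (count_split P h) leq_addr. Qed.

Lemma card_setP n (P : pred nat) : #|[set y : 'I_n | P y]| = count P (iota 0 n).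
Proof.
rewrite -val_enum_ord count_map cardsE cardE /enum_mem size_filter.
rewrite (@eq_filter _ _ predT) ?filter_predT //.
Qed.

Lemma cnt_setP n (P : pred nat) x : x <= n ->
  #|[set y : 'I_n | P y] :&: iseg n x| = count P (iota 0 x).
Proof.
move=> hx.
have -> : [set y : 'I_n | P y] :&: iseg n x = [set y : 'I_n | P y && (y < x)].
  by apply/setP => y; rewrite !inE.
rewrite (card_setP _ (fun y => P y && (y < x))) (count_split _ hx).
have -> : count (fun y => P y && (y < x)) (iota x (n - x)) = 0.
  apply/eqP; rewrite -leqn0 leqNgt -has_count; apply/hasPn => y.
  rewrite mem_iota => /andP [h1 _]; rewrite negb_and; apply/orP; right; lia.
rewrite addn0; apply: eq_in_count => y; rewrite mem_iota => /andP [_ h].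
rewrite add0n in h; by rewrite h andbT.
Qed.

Lemma card_iseg n x : x <= n -> #|iseg n x| = x.
Proof.
move=> hx; rewrite /iseg (card_setP _ (fun y => y < x)) (count_split _ hx).
have -> : count (fun y => y < x) (iota x (n - x)) = 0.
  apply/eqP; rewrite -leqn0 leqNgt -has_count; apply/hasPn => y.
  rewrite mem_iota => /andP [h1 _]; lia.
rewrite addn0 -[X in _ = X](size_iota 0 x); apply/eqP; rewrite -all_count; apply/allP => y.
by rewrite mem_iota.
Qed.

Lemma cnt_mono n (A : {set 'I_n}) a b : a <= b ->
  #|A :&: iseg n a| <= #|A :&: iseg n b|.
Proof.
move=> h; apply: subset_leq_card; apply/subsetP => y; rewrite !inE.
by case/andP => -> /= h'; exact: leq_trans h' h.
Qed.

Lemma cnt_le n (A : {set 'I_n}) x : #|A :&: iseg n x| <= #|A|.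
Proof. exact/subset_leq_card/subsetIl. Qed.

Lemma cntU n (A B : {set 'I_n}) x : A :&: B = set0 ->
  #|(A :|: B) :&: iseg n x| = #|A :&: iseg n x| + #|B :&: iseg n x|.
Proof.
move=> h; rewrite setIUl cardsU.
have -> : (A :&: iseg n x) :&: (B :&: iseg n x) = set0.
  apply/setP => y; have := congr1 (fun S : {set 'I_n} => y \in S) h; rewrite !inE /=.
  by case: (y \in A); case: (y \in B); case: (y < x).
have e0 : #|(set0 : {set 'I_n})| = 0 := cards0 _. by rewrite e0 subn0.
Qed.

Lemma cnt_low n (A : {set 'I_n}) m x : (forall y, y \in A -> m <= y) -> x <= m ->
  #|A :&: iseg n x| = 0.
Proof.
move=> h hx; apply/eqP; rewrite cards_eq0; apply/eqP/setP => y; rewrite !inE.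
apply/negbTE/andP => -[/h h1 h2]; lia.
Qed.

Lemma cnt_high n (A : {set 'I_n}) m x : (forall y, y \in A -> y < m) -> m <= x ->
  #|A :&: iseg n x| = #|A|.
Proof.
move=> h hx; have -> : A :&: iseg n x = A; last by []. apply/setIidPl/subsetP => y hy; rewrite inE.
have := h y hy; lia.
Qed.

Lemma cnt_segD n (B : {set 'I_n}) m x : x <= m -> m <= n ->
  #|(iseg n m :\: B) :&: iseg n x| + #|B :&: iseg n x| = x.
Proof.
move=> hx hm; have hxn : x <= n by lia.
have -> : (iseg n m :\: B) :&: iseg n x = iseg n x :\: B.
  apply/setP => y; rewrite !inE; case: (y \in B) => //=.
  case h: (y < x); last by rewrite andbF.
  rewrite andbT; apply: leq_trans h hx.
have hb : #|B :&: iseg n x| <= x.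
  by rewrite -{2}(card_iseg hxn); apply: subset_leq_card; exact: subsetIr.
rewrite cardsD setIC card_iseg //; lia.
Qed.

Lemma cnt_BD n (B : {set 'I_n}) m x : m <= x ->
  #|(B :\: iseg n m) :&: iseg n x| + #|B :&: iseg n m| = #|B :&: iseg n x|.
Proof.
move=> hx; rewrite -(cardsID (iseg n m) (B :&: iseg n x)) addnC.
have -> : B :&: iseg n x :&: iseg n m = B :&: iseg n m.
  apply/setP => y; rewrite !inE; case: (y \in B) => //=.
  case h: (y < m); last by rewrite andbF.
  by rewrite andbT; apply: leq_trans h hx.
have -> : B :&: iseg n x :\: iseg n m = (B :\: iseg n m) :&: iseg n x.
  apply/setP => y; rewrite !inE.
  by case: (y \in B); case: (y < m); case: (y < x).
by [].
Qed.

Lemma cnt_sym n (B : {set 'I_n}) m x : m <= n ->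
  (x <= m -> #|symdiff B (iseg n m) :&: iseg n x| + #|B :&: iseg n x| = x) /\
  (m <= x -> #|symdiff B (iseg n m) :&: iseg n x| + 2 * #|B :&: iseg n m|
             = m + #|B :&: iseg n x|).
Proof.
move=> hm; rewrite /symdiff cntU; last first.
  apply/setP => y; rewrite !inE.
  by case: (y \in B); case: (y < m).
have hlo : forall y, y \in B :\: iseg n m -> m <= y.
  by move=> y; rewrite !inE => /andP [h _]; rewrite leqNgt.
have hhi : forall y, y \in iseg n m :\: B -> y < m.
  by move=> y; rewrite !inE => /andP [_ h].
have hs := @cnt_segD n B m m (leqnn m) hm.
rewrite (cnt_high _ (leqnn m)) // in hs.
split=> hx.
  rewrite (cnt_low hlo hx) add0n; exact: cnt_segD.
rewrite (cnt_high hhi hx).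
have := cnt_BD B hx; lia.
Qed.

Definition par n (b : bool) m r : {set 'I_n} :=
  [set y : 'I_n | (m <= y) && (y < m + 2 * r) && (odd (y - m) == b)].

Lemma count_par b m r q :
  count (fun y => (m <= y) && (y < m + 2 * r) && (odd (y - m) == b))
    (iota 0 (m + 2 * q)) = minn r q.
Proof.
elim: q => [|q IH].
  rewrite muln0 addn0; apply/eqP; rewrite -leqn0 leqNgt -has_count.
  apply/hasPn => y; rewrite mem_iota => /andP [_ hy].
  apply/negP => /andP [/andP [h1 _] _]; lia.
have -> : m + 2 * q.+1 = (m + 2 * q) + 2 by lia.
rewrite iotaD count_cat IH add0n /=.
have e1 : (m <= m + 2 * q) && (m + 2 * q < m + 2 * r) && (odd (m + 2 * q - m) == b)
    = (q < r) && ~~ b.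
  rewrite (_ : m + 2 * q - m = 2 * q); last lia.
  rewrite mul2n odd_double leq_addr /=.
  have -> : (m + q.*2 < m + 2 * r) = (q < r) by apply/idP/idP; lia.
  by clear IH; case: b; rewrite ?andbT ?andbF.
have e2 : (m <= (m + 2 * q).+1) && ((m + 2 * q).+1 < m + 2 * r)
    && (odd ((m + 2 * q).+1 - m) == b) = (q < r) && b.
  rewrite (_ : (m + 2 * q).+1 - m = (2 * q).+1); last lia.
  rewrite /= mul2n odd_double /=.
  have -> : (m <= (m + q.*2).+1 < m + 2 * r) = (q < r) by apply/idP/idP; lia.
  by clear IH e1; case: b; rewrite ?andbT ?andbF.
rewrite e1 e2; clear IH e1 e2; case: (ltnP q r) => h; case: b => /=; lia.
Qed.

Lemma par_low n b m r y : y \in par n b m r -> m <= y.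
Proof. by rewrite inE => /andP [/andP [h _] _]. Qed.

Lemma par_high n b m r y : y \in par n b m r -> y < m + 2 * r.
Proof. by rewrite inE => /andP [/andP [_ h] _]. Qed.

Lemma cnt_par n b m r x : m <= x -> x <= n ->
  minn r ((x - m) %/ 2) <= #|par n b m r :&: iseg n x|.
Proof.
move=> h1 h2; rewrite /par (@cnt_setP n (fun y => (m <= y) && (y < m + 2 * r) && (odd (y - m) == b)) x) //.
rewrite -(count_par b m r); apply: count_mono; lia.
Qed.

Lemma card_par n b m r : m + 2 * r <= n -> #|par n b m r| = r.
Proof.
move=> h; rewrite /par (card_setP _ (fun y => (m <= y) && (y < m + 2 * r) && (odd (y - m) == b))).
rewrite (count_split _ h) count_par minnn.
have -> : count (fun y => (m <= y) && (y < m + 2 * r) && (odd (y - m) == b))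
    (iota (m + 2 * r) (n - (m + 2 * r))) = 0.
  apply/eqP; rewrite -leqn0 leqNgt -has_count; apply/hasPn => y.
  rewrite mem_iota => /andP [hy _].
  apply/negP => /andP [/andP [_ h3] _]; lia.
by rewrite addn0.
Qed.

Lemma cnt_full n (A : {set 'I_n}) : #|A :&: iseg n n| = #|A|.
Proof. by apply: (@cnt_high n A n n) => // y _; exact: ltn_ord. Qed.

Lemma pG_le n k l (B : {set 'I_n}) : pG k l B <= l.
Proof. rewrite /pG; apply/bigmax_leqP => i _; rewrite -ltnS; exact: ltn_ord. Qed.

Lemma pG_att n k l (B : {set 'I_n}) :
  pG k l B <= #|B :&: iseg n (2 * pG k l B + k - l)|.
Proof.
rewrite /pG; apply: (big_ind (fun v => v <= #|B :&: iseg n (2 * v + k - l)|)) => //.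
move=> x y hx hy; case: (leqP x y) => h.
  by [].
by [].
Qed.

Lemma pG_max n k l (B : {set 'I_n}) q : q <= l ->
  q <= #|B :&: iseg n (2 * q + k - l)| -> q <= pG k l B.
Proof.
move=> hq hc; have hq' : q < l.+1 by [].
rewrite /pG; exact: (@leq_bigmax_cond _ _ (fun p : 'I_l.+1 => (p : nat)) (Ordinal hq')).
Qed.

Lemma pG_facts n k l (B : {set 'I_n}) : l <= k -> k + l <= n -> #|B| = l ->
  [/\ pG k l B <= l, 2 * pG k l B + k - l <= n,
      #|B :&: iseg n (2 * pG k l B + k - l)| = pG k l B &
   forall q, pG k l B < q -> q <= l -> #|B :&: iseg n (2 * q + k - l)| < q].
Proof.
move=> hlk hkl hB.
have hp := pG_le k l B; have ha := pG_att k l B.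
have hmax : forall q, pG k l B < q -> q <= l -> #|B :&: iseg n (2 * q + k - l)| < q.
  move=> q h1 h2; rewrite ltnNge; apply/negP => h3.
  have := pG_max h2 h3; lia.
split => //; first lia.
apply/eqP; rewrite eqn_leq ha andbT.
case: (ltnP (pG k l B) l) => h.
  have := hmax _ (ltnSn _) h.
  have := @cnt_mono n B (2 * pG k l B + k - l) (2 * (pG k l B).+1 + k - l) ltac:(lia).
  lia.
have := cnt_le B (2 * pG k l B + k - l); lia.
Qed.

Lemma KB n k l (B : {set 'I_n}) x : l <= k -> k + l <= n -> #|B| = l ->
  2 * pG k l B + k - l <= x -> x <= n ->
  #|B :&: iseg n x| <= pG k l B + (x - (2 * pG k l B + k - l)) %/ 2.
Proof.
move=> hlk hkl hB h1 h2.
have [hp hm hc hmax] := pG_facts hlk hkl hB.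
set p := pG k l B in hp hm hc hmax *.
set t := (x - (2 * p + k - l)) %/ 2.
case: (leqP l (p + t)) => h.
  have := cnt_le B x; lia.
have := hmax (p + t).+1 ltac:(lia) h.
have := @cnt_mono n B x (2 * (p + t).+1 + k - l) ltac:(rewrite /t; lia).
lia.
Qed.

Lemma symdiffK n (B S : {set 'I_n}) : symdiff (symdiff B S) S = B.
Proof.
apply/setP => y; rewrite /symdiff !inE.
by case: (y \in B); case: (y \in S).
Qed.

Unset Implicit Arguments.

Theorem lemma5p1 (n k l : nat) (F G : {set {set 'I_n}}) :
  1 <= l -> l <= k -> k + l <= n ->
  (forall A, A \in F -> #|A| = k) ->
  (forall B, B \in G -> #|B| = l) ->
  initial F -> initial G -> cross_intersecting F G ->
  (k = l -> forall B, B \in G -> 1 <= pG k l B) ->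
  (forall B, B \in G -> #|phi k l B| = k) /\
  ({in G &, injective (phi k l)} /\ (forall B, B \in G -> phi k l B \notin F)) /\
  (forall B, B \in G -> B != @iseg n l -> phi k l B :&: @iseg n l != set0).
Proof.
move=> hl hlk hkln hF hG iF iG cFG hkl.
have hcard : forall B, B \in G -> #|phi k l B| = k.
  move=> B hB; have hBl := hG B hB.
  have [hp hm hc hmax] := pG_facts hlk hkln hBl.
  have [_ h2] := @cnt_sym n B (2 * pG k l B + k - l) n hm.
  have := h2 hm; rewrite !cnt_full /phi; lia.
split => //; split; first split.
- move=> B1 B2 h1 h2.
  wlog: B1 B2 h1 h2 / pG k l B1 <= pG k l B2.
    move=> hw e; case: (leqP (pG k l B1) (pG k l B2)) => h.
      exact: hw.
    by symmetry; apply: hw => //; exact: ltnW.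
  move=> hle e.
  have [hp1 hm1 hc1 hmax1] := pG_facts hlk hkln (hG B1 h1).
  have [hp2 hm2 hc2 hmax2] := pG_facts hlk hkln (hG B2 h2).
  case: (ltngtP (pG k l B1) (pG k l B2)) hle => // h _.
    exfalso.
    have hq := hmax1 _ h hp2.
    have [a1 _] := @cnt_sym n B1 (2 * pG k l B1 + k - l) (2 * pG k l B1 + k - l) hm1.
    have [_ b1] := @cnt_sym n B1 (2 * pG k l B1 + k - l) (2 * pG k l B2 + k - l) hm1.
    have [a2 _] := @cnt_sym n B2 (2 * pG k l B2 + k - l) (2 * pG k l B2 + k - l) hm2.
    have := a1 (leqnn _); have := b1 ltac:(lia); have := a2 (leqnn _).
    rewrite /phi in e; rewrite e; lia.
  rewrite /phi h in e.
  by rewrite -(symdiffK B1 (iseg n (2 * pG k l B2 + k - l))) e symdiffK.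
- move=> B hB; apply/negP => hH.
  have hBl := hG B hB.
  have [hp hm hc hmax] := pG_facts hlk hkln hBl.
  have hKB := fun x => @KB n k l B x hlk hkln hBl.
  set p := pG k l B in hp hm hc hmax hKB hH.
  set m := 2 * p + k - l in hm hc hmax hKB hH.
  set r := l - p.
  have hmr : m + 2 * r <= n by rewrite /m /r; lia.
  have hs := @cnt_segD n B m m (leqnn m) hm.
  have hhi : forall y, y \in iseg n m :\: B -> y < m.
    by move=> y; rewrite !inE => /andP [_ h].
  have hhi' : forall y, y \in B :&: iseg n m -> y < m.
    by move=> y; rewrite !inE => /andP [_ h].
  rewrite (cnt_high hhi (leqnn m)) in hs.
  set G' := (B :&: iseg n m) :|: par n false m r.
  set H' := (iseg n m :\: B) :|: par n true m r.
  have dG : (B :&: iseg n m) :&: par n false m r = set0.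
    apply/setP => y; rewrite !inE; case: (ltnP y m) => //; by rewrite andbF.
  have dH : (iseg n m :\: B) :&: par n true m r = set0.
    apply/setP => y; rewrite !inE; case: (ltnP y m) => //; by rewrite andbF.
  have cpar := fun b => card_par b hmr.
  have hG' : G' \in G.
    apply: (iG _ B) hB; apply: shift_crit.
      rewrite -cnt_full cntU // !cnt_full cpar hc hBl /r; lia.
    move=> x hx; rewrite cntU //.
    case: (leqP x m) => hxm.
      rewrite (cnt_low (@par_low n false m r) hxm) addn0.
      have -> : B :&: iseg n m :&: iseg n x = B :&: iseg n x; last by [].
      apply/setP => y; rewrite !inE; case: (y \in B) => //=.
      case h: (y < x); last by rewrite andbF.
      by rewrite andbT; apply: leq_trans h hxm.
    rewrite (cnt_high hhi' (ltnW hxm)) hc.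
    have := @cnt_par n false m r x (ltnW hxm) hx.
    have := hKB x (ltnW hxm) hx; have := cnt_le B x; rewrite hBl /r; lia.
  have hH' : H' \in F.
    apply: (iF _ (phi k l B)) hH; apply: shift_crit.
      rewrite hcard // -cnt_full cntU // !cnt_full cpar /r; move: hs; rewrite hc /m; lia.
    move=> x hx; rewrite [#|H' :&: _|]cntU //.
    have [s1 s2] := @cnt_sym n B m x hm.
    case: (leqP x m) => hxm.
      rewrite (cnt_low (@par_low n true m r) hxm) addn0.
      have := s1 hxm; have := cnt_segD B hxm hm; rewrite /phi -/p -/m; lia.
    rewrite (cnt_high hhi (ltnW hxm)).
    have := @cnt_par n true m r x (ltnW hxm) hx.
    have := hKB x (ltnW hxm) hx; have := cnt_le B x; have := s2 (ltnW hxm).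
    rewrite /phi -/p -/m hBl /r; lia.
  have := cFG _ _ hH' hG'; rewrite /H' /G'.
  have -> : (iseg n m :\: B :|: par n true m r) :&: (B :&: iseg n m :|: par n false m r) = set0.
    apply/setP => y; rewrite !inE; case: (y \in B); case: (ltnP y m) => //= _;
    by case: (odd (y - m)); rewrite ?andbF ?andbT.
  by rewrite eqxx.
- move=> B hB hne.
  have hBl := hG B hB.
  have [hp hm hc hmax] := pG_facts hlk hkln hBl.
  rewrite -cards_eq0 -lt0n.
  have [s1 s2] := @cnt_sym n B (2 * pG k l B + k - l) l hm.
  case: (leqP (2 * pG k l B + k - l) l) => hml.
    have := s2 hml; have := @cnt_mono n B _ _ hml.
    case: (eqVneq k l) => [ekl|nekl].
      have := hkl ekl B hB; rewrite /phi; lia.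
    rewrite /phi; lia.
  have := s1 (ltnW hml); rewrite /phi.
  have : #|B :&: iseg n l| < l.
    rewrite ltn_neqAle; apply/andP; split; last by rewrite -hBl cnt_le.
    apply/negP => /eqP he.
    have e1 : B :&: iseg n l = B.
      apply/eqP; rewrite eqEcard subsetIl /= he hBl.
      by [].
    move/negP: hne; apply; rewrite eqEcard; apply/andP; split.
      by apply/setIidPl.
    rewrite card_iseg ?hBl //; lia.
  lia.
Qed.
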